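(* Let $a,b$ be integers, let $G\in\mathscr{G}_{a,b}$, and let $P=u_0u_1\ldots u_k$ be an internal path or an internal cycle in $G$. Then: (i) $k\le 3$; (ii) if $k=3$, then there is no internal path $v_0v_1v_2$ of length $2$ in $G$ with $d_G(v_0)=d_G(v_2)=d_G(u_0)$; (iii) if $k=3$, then $d_G(u_0)=d_G(u_3)$; moreover, if $G$ contains another internal path $v_0v_1v_2v_3$, then $d_G(v_0)=d_G(v_3)=d_G(u_0)=d_G(u_3)$.
   Context: All graphs are simple and connected; $d_G(v)$ is the degree of $v$ and $N_G(v)$ its neighbourhood. For integers $a,b$, $\mathscr{G}_{a,b}$ is the set of connected graphs $G$ such that for every $v\in V_G$, $\sum_{u\in N_G(v)}d_G(u)=a\,d_G(v)+b-d_G(v)^2$. A path $u_0u_1\ldots u_k$ ($k\ge1$) in $G$ with $d_G(u_0),d_G(u_k)\ge 3$ and $d_G(u_i)=2$ for $1\le i\le k-1$ is called an internal path if $u_0\ne u_k$, and an internal cycle if $u_0=u_k$ (then $k\ge 3$). *)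

(* Defs.v *)
From mathcomp Require Import all_boot all_order all_algebra.
Set Implicit Arguments. Unset Strict Implicit. Unset Printing Implicit Defensive.
Import GRing.Theory Num.Theory.

Definition simple_graph (T : finType) (e : rel T) : Prop :=
  symmetric e /\ irreflexive e.

Definition connected_graph (T : finType) (e : rel T) : Prop :=
  forall x y : T, connect e x y.

Definition deg (T : finType) (e : rel T) (v : T) : nat := #|[pred u | e v u]|.

(* G in \mathscr{G}_{a,b} (connectedness and simplicity stated separately) *)
Definition in_Gab (T : finType) (e : rel T) (a b : int) : Prop :=
  forall v : T,
    (\sum_(u | e v u) (deg e u)%:Z)%R =
    (a * (deg e v)%:Z + b - (deg e v)%:Z ^+ 2)%R.

(* The walk u_0 u_1 ... u_k is encoded as x :: p, with k = size p and
   u_i = nth x (x :: p) i.  Common conditions of internal paths/cycles. *)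
Definition internal_walk (T : finType) (e : rel T) (x : T) (p : seq T) : Prop :=
  let k := size p in
  let u := nth x (x :: p) in
  [/\ 1 <= k, path e x p, 3 <= deg e (u 0), 3 <= deg e (u k)
    & forall i, 1 <= i < k -> deg e (u i) = 2].

Definition internal_path (T : finType) (e : rel T) (x : T) (p : seq T) : Prop :=
  [/\ internal_walk e x p, x != last x p & uniq (x :: p)].

Definition internal_cycle (T : finType) (e : rel T) (x : T) (p : seq T) : Prop :=
  [/\ internal_walk e x p, x = last x p, 3 <= size p & uniq p].

(* Main.v *)
Require Import Defs.
From mathcomp Require Import all_boot all_order all_algebra zify.
Import GRing.Theory Num.Theory.
Lemma deg2_sum (T : finType) (e : rel T) (a b : int) (v x y : T) :
  in_Gab e a b -> deg e v = 2 -> e v x -> e v y -> x != y ->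
  ((deg e x + deg e y)%N%:Z = 2 * a + b - 4)%R.
Proof.
move=> HG Hd Hx Hy Hxy.
have HA : [set u | e v u] = [set x; y].
  apply/eqP; rewrite eq_sym eqEcard; apply/andP; split.
    by apply/subsetP => u; rewrite !inE => /orP[]/eqP->.
  by rewrite cards2 Hxy cardsE -Hd.
have := HG v; rewrite Hd.
rewrite (eq_bigl (fun u => u \in [set x; y])) => [|u]; last by rewrite -HA inE.
rewrite big_setU1 /=; last by rewrite inE.
rewrite big_set1 PoszD => ->.
rewrite expr2 mulrC; lia.
Qed.
Lemma walk3 (T : finType) (e : rel T) (a b : int) (y v1 v2 v3 : T) (r : seq T) :
  symmetric e -> in_Gab e a b -> internal_walk e y [:: v1, v2, v3 & r] ->
  y != v2 -> v1 != v3 ->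
  [/\ ((deg e y + 2)%N%:Z = 2 * a + b - 4)%R, 3 <= deg e y &
      ((deg e v1 + deg e v3)%N%:Z = 2 * a + b - 4)%R].
Proof.
move=> Hs HG [_ /= /and4P[e1 e2 e3 _] dy _ Hi] n1 n2.
have d1 : deg e v1 = 2 by apply: (Hi 1).
have d2 : deg e v2 = 2 by apply: (Hi 2).
split=> //.
  have S := deg2_sum _ _ _ _ v1 y v2 HG d1 _ e2 n1; rewrite d2 in S; apply S; by rewrite Hs.
apply: (deg2_sum _ _ _ _ _ _ _ HG d2) => //; by rewrite Hs.
Qed.

Lemma walk2 (T : finType) (e : rel T) (a b : int) (y v1 v2 : T) :
  symmetric e -> in_Gab e a b -> internal_walk e y [:: v1; v2] ->
  y != v2 -> ((deg e y + deg e v2)%N%:Z = 2 * a + b - 4)%R.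
Proof.
move=> Hs HG [_ /= /and3P[e1 e2 _] dy _ Hi] n1.
have d1 : deg e v1 = 2 by apply: (Hi 1).
apply: (deg2_sum _ _ _ _ _ _ _ HG d1) => //; by rewrite Hs.
Qed.

Theorem lemma1p6 (T : finType) (e : rel T) (a b : int) :
  simple_graph e -> connected_graph e -> in_Gab e a b ->
  forall (x : T) (p : seq T),
    internal_path e x p \/ internal_cycle e x p ->
    [/\ size p <= 3,
        size p = 3 ->
          forall (y : T) (q : seq T), size q = 2 -> internal_path e y q ->
            deg e y = deg e x -> deg e (last y q) = deg e x -> False
      & size p = 3 ->
          deg e x = deg e (last x p) /\
          (forall (y : T) (q : seq T), size q = 3 -> internal_path e y q ->
             [/\ deg e y = deg e (last y q), deg e (last y q) = deg e x
               & deg e x = deg e (last x p)])].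
Proof.
move=> [Hs _] _ HG x p Hp.
have [W D] : internal_walk e x p /\
   (forall u1 u2 u3 r, p = [:: u1, u2, u3 & r] -> x != u2 /\ u1 != u3).
  case: Hp => [[W _ U]|[W Hl _ U]]; split => // u1 u2 u3 r Ep; subst p.
    move: U => /=; rewrite !inE !negb_or.
    by case/andP => /and4P[_ -> _ _] /andP[/and3P[_ -> _] _].
  move: U => /=; rewrite !inE !negb_or.
  case/andP => /and3P[_ -> _] /andP[/andP[H1 H2] _]; split => //.
  have : u2 \notin u3 :: r by rewrite inE negb_or H1 H2.
  rewrite Hl /=; apply: contra => /eqP <-.
  by rewrite mem_last.
clear Hp; case: p W D => [|u1 [|u2 [|u3 [|u4 r]]]] W D.
- by case: W.
- by split.
- by split.
- have [n1 n2] := D _ _ _ _ erefl.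
  have [c1 dx c2] := walk3 _ _ _ _ _ _ _ _ _ Hs HG W n1 n2.
  have d1 : deg e u1 = 2 by case: W => _ _ _ _ Hi; apply: (Hi 1).
  rewrite d1 in c2.
  have Ex : deg e x = deg e u3 by lia.
  split => // _.
    move=> y [|v1 [|v2 [|? ?]]] // _ [Wq nq _] E1 E2.
    have := walk2 _ _ _ _ _ _ _ Hs HG Wq nq; rewrite E1 E2 /=; lia.
  split => // y [|v1 [|v2 [|v3 [|? ?]]]] // _ [Wq _ Uq].
  have [m1 m2] : y != v2 /\ v1 != v3.
    move: Uq => /=; rewrite !inE !negb_or.
    by case/and4P => /and3P[_ -> _] /andP[_ ->].
  have [c3 _ c4] := walk3 _ _ _ _ _ _ _ _ _ Hs HG Wq m1 m2.
  have d1' : deg e v1 = 2 by case: Wq => _ _ _ _ Hi; apply: (Hi 1).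
  rewrite d1' in c4.
  split => /=; lia.
- have [n1 n2] := D _ _ _ _ erefl.
  have [c1 dx c2] := walk3 _ _ _ _ _ _ _ _ _ Hs HG W n1 n2.
  have d1 : deg e u1 = 2 by case: W => _ _ _ _ Hi; apply: (Hi 1).
  have d3 : deg e u3 = 2 by case: W => _ _ _ _ Hi; apply: (Hi 3).
  rewrite d1 d3 in c2.
  exfalso; lia.
Qed.
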